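(* Assume $f$ satisfies (A1). Let $x_0\in X$, $\hat y\in Y$, and run Algorithm 1 with step size $\gamma_x=1/\lambda$ and a number of iterations $$T\ge\frac{300\lambda[\varphi(x_0)-\psi(\hat y)]}{\varepsilon^2},$$ where $\psi(y)=\min_{x\in X}f(x,y)$. Then its output $x^*$ satisfies $\|\nabla\hat\varphi_{2\lambda}(x^* )\|\le\varepsilon/6$, where $\hat\varphi(x)=f(x,\hat y)$. Moreover, $\|\nabla\varphi_{2\lambda}(x^* )\|\le\varepsilon$ provided $24\mu\mathsf D\le\varepsilon$.
   Context: Let $E_x,E_y$ be finite-dimensional Euclidean spaces with Euclidean norms $\|\cdot\|$. Let $X\subseteq E_x$, $Y\subseteq E_y$ be convex sets with nonempty interior, $Y$ compact, and $\mathsf D\ge\mathrm{diam}(Y)$. Let $f:X\times Y\to\mathbb R$ and $\varphi(x)=\max_{y\in Y}f(x,y)$. (A1): $\nabla_x f$ exists on $X\times Y$ and $\|\nabla_x f(x',y')-\nabla_x f(x,y)\|\le\lambda\|x'-x\|+\mu\|y'-y\|$ for all $x,x'\in X,y,y'\in Y$, with $\lambda>0,\mu\ge0$. For a $\lambda'$-weakly convex function $\phi:X\to\mathbb R$ (i.e. $\phi+\frac{\lambda'}2\|\cdot\|^2$ convex) and $\bar\lambda>\lambda'$, the Moreau envelope is $\phi_{\bar\lambda}(x)=\min_{u\in X}\{\phi(u)+\frac{\bar\lambda}{2}\|u-x\|^2\}$; $\Pi_X$ denotes Euclidean projection onto $X$. Algorithm 1 (input $x_0\in X$, $\hat y\in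 Y$, $\gamma_x>0$, $T\in\mathbb N$): set $x^*=x_0$, $\varepsilon^*=+\infty$. For $t=0,\dots,T-1$: set $\tilde x_{t+1}=x_t-\gamma_x\nabla_x f(x_t,\hat y)$, $x_{t+1}=\Pi_X[\tilde x_{t+1}]$, $\varepsilon_t^2=\|\nabla_x f(x_t,\hat y)\|^2-\frac1{\gamma_x^2}\|\tilde x_{t+1}-x_{t+1}\|^2$; if $\varepsilon_t<\varepsilon^*$, set $x^*=x_t$, $\varepsilon^*=\varepsilon_t$. Output $x^*$. *)

(* Defs.v *)
From HB Require Import structures.
From mathcomp Require Import all_boot all_order all_algebra.
From mathcomp Require Import all_classical all_reals all_analysis.
Set Implicit Arguments. Unset Strict Implicit. Unset Printing Implicit Defensive.
Import Order.TTheory GRing.Theory Num.Theory.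
Local Open Scope classical_set_scope.
Local Open Scope ring_scope.

Section Defs.
Variable R : realType.

Definition dotv (n : nat) (u v : 'rV[R]_n) : R := \sum_(i < n) u ord0 i * v ord0 i.
Definition enorm (n : nat) (u : 'rV[R]_n) : R := Num.sqrt (dotv u u).

Definition convex_in (n : nat) (A : set 'rV[R]_n) : Prop :=
  forall a b (t : R), A a -> A b -> 0 <= t -> t <= 1 -> A (t *: a + (1 - t) *: b).

Definition is_grad_within (n : nat) (A : set 'rV[R]_n) (phi : 'rV[R]_n -> R)
    (x g : 'rV[R]_n) : Prop :=
  forall eps : R, 0 < eps -> exists2 delta : R, 0 < delta &
    forall u, A u -> enorm (u - x) < delta ->
      `|phi u - phi x - dotv g (u - x)| <= eps * enorm (u - x).

Definition is_proj (n : nat) (A : set 'rV[R]_n) (p : 'rV[R]_n -> 'rV[R]_n) : Prop :=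
  forall z, A (p z) /\ forall u, A u -> enorm (z - p z) <= enorm (z - u).

Definition moreau (n : nat) (X : set 'rV[R]_n) (phi : 'rV[R]_n -> R) (lb : R)
    (x : 'rV[R]_n) : R :=
  inf [set phi u + lb / 2 * enorm (u - x) ^+ 2 | u in X].

(* phi(x) = max_{y in Y} f(x,y) (the max is assumed attained in the theorem) *)
Definition phimax (n m : nat) (f : 'rV[R]_n -> 'rV[R]_m -> R) (Y : set 'rV[R]_m)
    (x : 'rV[R]_n) : R := sup [set f x y | y in Y].

Definition psimin (n m : nat) (f : 'rV[R]_n -> 'rV[R]_m -> R) (X : set 'rV[R]_n)
    (y : 'rV[R]_m) : \bar R := ereal_inf [set (f x y)%:E | x in X].

(* Algorithm 1.  State after t iterations: (x_t, x_star, eps_star). *)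
Fixpoint alg1_state (n m : nat) (gx : 'rV[R]_n -> 'rV[R]_m -> 'rV[R]_n)
    (proj : 'rV[R]_n -> 'rV[R]_n) (x0 : 'rV[R]_n) (yh : 'rV[R]_m) (gam : R)
    (t : nat) : 'rV[R]_n * 'rV[R]_n * \bar R :=
  match t with
  | 0%N => (x0, x0, +oo%E)
  | t'.+1 =>
      let '(xt, xs, es) := alg1_state gx proj x0 yh gam t' in
      let g := gx xt yh in
      let xtil := xt - gam *: g in
      let xnext := proj xtil in
      let et := Num.sqrt (enorm g ^+ 2 - gam^-2 * enorm (xtil - xnext) ^+ 2) in
      if (et%:E < es)%E then (xnext, xt, et%:E) else (xnext, xs, es)
  end.

Definition alg1 (n m : nat) (gx : 'rV[R]_n -> 'rV[R]_m -> 'rV[R]_n)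
    (proj : 'rV[R]_n -> 'rV[R]_n) (x0 : 'rV[R]_n) (yh : 'rV[R]_m) (gam : R)
    (T : nat) : 'rV[R]_n :=
  (alg1_state gx proj x0 yh gam T).1.2.

End Defs.

(* Main.v *)
Require Import Defs.
From HB Require Import structures.
From mathcomp Require Import all_boot all_order all_algebra.
From mathcomp Require Import all_classical all_reals all_analysis.
From mathcomp Require Import ring lra.
Import Order.TTheory GRing.Theory Num.Theory.
Import numFieldNormedType.Exports.
Local Open Scope classical_set_scope.
Local Open Scope ring_scope.
Set Implicit Arguments. Unset Strict Implicit. Unset Printing Implicit Defensive.


Section Vec.
Variable R : realType.
Variable n : nat.
Implicit Types u v w : 'rV[R]_n.

Lemma dotvC u v : dotv u v = dotv v u.
Proof. by apply: eq_bigr => i _; rewrite mulrC. Qed.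
Lemma dotvDl u v w : dotv (u + v) w = dotv u w + dotv v w.
Proof. by rewrite /dotv -big_split; apply: eq_bigr => i _; rewrite mxE mulrDl. Qed.
Lemma dotvDr u v w : dotv w (u + v) = dotv w u + dotv w v.
Proof. by rewrite dotvC dotvDl !(dotvC w). Qed.
Lemma dotvZl (c : R) u v : dotv (c *: u) v = c * dotv u v.
Proof. by rewrite /dotv mulr_sumr; apply: eq_bigr => i _; rewrite mxE mulrA. Qed.
Lemma dotvZr (c : R) u v : dotv u (c *: v) = c * dotv u v.
Proof. by rewrite dotvC dotvZl dotvC. Qed.
Lemma dotvNl u v : dotv (- u) v = - dotv u v.
Proof. by rewrite -scaleN1r dotvZl mulN1r. Qed.
Lemma dotvNr u v : dotv u (- v) = - dotv u v.
Proof. by rewrite dotvC dotvNl dotvC. Qed.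
Lemma dotvBl u v w : dotv (u - v) w = dotv u w - dotv v w.
Proof. by rewrite dotvDl dotvNl. Qed.
Lemma dotvBr u v w : dotv w (u - v) = dotv w u - dotv w v.
Proof. by rewrite dotvDr dotvNr. Qed.
Lemma dotv0l v : dotv 0 v = 0.
Proof. by rewrite /dotv big1 // => i _; rewrite mxE mul0r. Qed.
Lemma dotv0r v : dotv v 0 = 0.
Proof. by rewrite dotvC dotv0l. Qed.
Lemma dotv_ge0 u : 0 <= dotv u u.
Proof. by apply: sumr_ge0 => i _; rewrite -expr2 sqr_ge0. Qed.
Lemma enorm_sq u : enorm u ^+ 2 = dotv u u.
Proof. by rewrite /enorm sqr_sqrtr // dotv_ge0. Qed.
Lemma enorm_ge0 u : 0 <= enorm u.
Proof. exact: sqrtr_ge0. Qed.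
Lemma enorm0 : enorm (0 : 'rV[R]_n) = 0.
Proof. by rewrite /enorm dotv0l sqrtr0. Qed.
Lemma dotv_eq0 u : dotv u u = 0 -> u = 0.
Proof.
move=> H; apply/rowP => i; rewrite mxE.
have : u ord0 i * u ord0 i = 0.
  apply/eqP; rewrite -sqrf_eq0 expr2; apply/eqP.
  move: H; rewrite /dotv => /eqP; rewrite psumr_eq0; last by move=> j _; rewrite -expr2 sqr_ge0.
  by move/allP => /(_ i (mem_index_enum _)) /implyP /(_ isT) /eqP ->; rewrite mulr0.
by move/eqP; rewrite mulf_eq0 orbb => /eqP.
Qed.
Lemma enorm_eq0 u : enorm u = 0 -> u = 0.
Proof. by move=> H; apply: dotv_eq0; rewrite -enorm_sq H expr0n. Qed.

Lemma cauchy_schwarz u v : dotv u v <= enorm u * enorm v.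
Proof.
have [->|Hu] := eqVneq u 0; first by rewrite dotv0l enorm0 mul0r.
have [->|Hv] := eqVneq v 0; first by rewrite dotv0r enorm0 mulr0.
have pu : 0 < enorm u.
  rewrite lt_def enorm_ge0 andbT; apply/eqP => /enorm_eq0 E; by rewrite E eqxx in Hu.
have pv : 0 < enorm v.
  rewrite lt_def enorm_ge0 andbT; apply/eqP => /enorm_eq0 E; by rewrite E eqxx in Hv.
have H := dotv_ge0 (enorm v *: u - enorm u *: v).
rewrite !dotvBl !dotvBr !dotvZl !dotvZr -!enorm_sq (dotvC v u) in H.
have : 0 <= enorm u * enorm v * (enorm u * enorm v - dotv u v) by nra.
by rewrite pmulr_rge0 ?mulr_gt0 // subr_ge0.
Qed.

Lemma cauchy_schwarz_abs u v : `|dotv u v| <= enorm u * enorm v.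
Proof.
rewrite ler_norml cauchy_schwarz andbT.
have := cauchy_schwarz (- u) v.
rewrite dotvNl /enorm dotvNl dotvNr opprK -/(enorm u) -/(enorm v); lra.
Qed.

Lemma enormN u : enorm (- u) = enorm u.
Proof. by rewrite /enorm dotvNl dotvNr opprK. Qed.
Lemma enormB u v : enorm (u - v) = enorm (v - u).
Proof. by rewrite -enormN opprB. Qed.
Lemma enormZ (c : R) u : enorm (c *: u) = `|c| * enorm u.
Proof. by rewrite /enorm dotvZl dotvZr mulrA -expr2 sqrtrM ?sqr_ge0 // sqrtr_sqr. Qed.

Lemma enorm_sqD u v : enorm (u + v) ^+ 2 = enorm u ^+ 2 + 2 * dotv u v + enorm v ^+ 2.
Proof. rewrite !enorm_sq !dotvDl !dotvDr (dotvC v u); ring. Qed.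
Lemma enorm_sqB u v : enorm (u - v) ^+ 2 = enorm u ^+ 2 - 2 * dotv u v + enorm v ^+ 2.
Proof. rewrite !enorm_sq !dotvBl !dotvBr (dotvC v u); ring. Qed.



Lemma enorm_triangle u v : enorm (u + v) <= enorm u + enorm v.
Proof.
have h1 := cauchy_schwarz u v; have h2 := enorm_ge0 u; have h3 := enorm_ge0 v.
have h4 := enorm_ge0 (u + v).
have : enorm (u + v) ^+ 2 <= (enorm u + enorm v) ^+ 2 by rewrite enorm_sqD; nra.
by rewrite ler_sqr // nnegrE; lra.
Qed.

Lemma entry_le_enorm u i : `|u ord0 i| <= enorm u.
Proof.
rewrite -(ger0_norm (enorm_ge0 u)) -ler_sqr ?nnegrE // real_normK ?num_real //.
rewrite ger0_norm ?enorm_ge0 //.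
rewrite enorm_sq /dotv expr2 (bigD1 i) //= lerDl; apply: sumr_ge0 => j _; rewrite -expr2 sqr_ge0 //.
Qed.

End Vec.

Section Vec2.
Variable R : realType.
Variable n : nat.
Lemma mxnorm_le_enorm (u : 'rV[R]_n) : `|u| <= enorm u.
Proof.
rewrite [`|u|]mx_normrE; apply: bigmax_le => [|[i j] _]; first exact: enorm_ge0.
by rewrite /= (ord1 i); exact: entry_le_enorm.
Qed.
Lemma enorm_le_mxnorm (u : 'rV[R]_n) : enorm u ^+ 2 <= n%:R * `|u| ^+ 2.
Proof.
rewrite enorm_sq /dotv.
have -> : n%:R * `|u| ^+ 2 = \sum_(i < n) `|u| ^+ 2 by rewrite sumr_const card_ord mulr_natl.
apply: ler_sum => i _; rewrite -expr2 -real_normK ?num_real // ler_sqr ?nnegrE //.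
rewrite [`|u|]mx_normrE; apply: le_trans (le_bigmax _ _ (ord0, i)) => //.
Qed.
End Vec2.


Section RI.
Variable R : realType.

Lemma real_induction (P : R -> Prop) :
  P 0 ->
  (forall t, 0 <= t -> t < 1 -> P t -> exists2 d, 0 < d &
      forall h, 0 < h -> h < d -> t + h <= 1 -> P (t + h)) ->
  (forall t, 0 < t -> t <= 1 -> (forall s, 0 <= s -> s < t -> P s) -> P t) ->
  P 1.
Proof.
move=> P0 Pr Pl.
pose S := [set s : R | 0 <= s <= 1 /\ forall r, 0 <= r -> r <= s -> P r].
have S0 : S 0 by split; [rewrite lexx ler01 | move=> r r0 r0'; have -> : r = 0 by apply/eqP; rewrite eq_le r0' r0].
have ubS : ubound S 1 by move=> s [/andP[]].
have hsS : has_sup S by split; [exists 0 | exists 1].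
set s := sup S.
have s0 : 0 <= s by apply: (sup_ubound hsS.2).
have s1 : s <= 1 by apply: ge_sup => //; exists 0.
have below : forall r, 0 <= r -> r < s -> P r.
  move=> r r0 rs.
  have rs' : 0 < s - r by rewrite subr_gt0.
  have [e [_ He] Hle] := sup_adherent rs' hsS.
  apply: (He r r0); rewrite -/s in Hle; apply: ltW; move: Hle; rewrite opprB addrCA subrr addr0 //.
have Ps : P s.
  have [->|sne0] := eqVneq s 0; first exact: P0.
  apply: Pl => //; by rewrite lt_def sne0 s0.
have Ss : S s.
  split; first by rewrite s0 s1.
  move=> r r0; rewrite le_eqVlt => /orP[/eqP -> //|]; exact: below.
have [s_eq1|s_lt1] := eqVneq s 1; first by rewrite -s_eq1.
have slt1 : s < 1 by rewrite lt_def eq_sym s_lt1 s1.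
have [d d0 Hd] := Pr s s0 slt1 Ps.
pose h := Num.min (d / 2) (1 - s).
have [hd2 hs1] : h <= d / 2 /\ h <= 1 - s by have := lexx h; rewrite {2}/h le_min => /andP[].
have h0 : 0 < h by rewrite lt_min divr_gt0 //= subr_gt0.
have Ssh : S (s + h).
  split; first by apply/andP; split; lra.
  move=> r r0 rle; have [rs|sr] := leP r s; first by apply: Ss.2.
  have -> : r = s + (r - s) by rewrite addrCA subrr addr0.
  apply: Hd; lra.
have := sup_ubound hsS.2 Ssh; rewrite -/s; lra.
Qed.
End RI.

Section Seg.
Variable R : realType.
Variable n : nat.
Variable X : set 'rV[R]_n.
Hypothesis HX : convex_in X.

Lemma seg_in (a b : 'rV[R]_n) t : X a -> X b -> 0 <= t -> t <= 1 -> X (a + t *: (b - a)).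
Proof.
move=> Xa Xb t0 t1; have := HX Xb Xa t0 t1.
suff -> : t *: b + (1 - t) *: a = a + t *: (b - a) by [].
by apply/rowP => i; rewrite !mxE; ring.
Qed.

Lemma seg_frechet (psi : 'rV[R]_n -> R) (a v g : 'rV[R]_n) t :
  is_grad_within X psi (a + t *: v) g ->
  forall eps, 0 < eps -> exists2 d, 0 < d & forall s,
    X (a + s *: v) -> `|s - t| < d ->
    `|psi (a + s *: v) - psi (a + t *: v) - (s - t) * dotv g v| <= eps * `|s - t|.
Proof.
move=> Hg eps e0.
have nv0 := enorm_ge0 v.
have nv1 : 0 < enorm v + 1 by lra.
have [d d0 Hd] := Hg (eps / (enorm v + 1)) (divr_gt0 e0 nv1).
exists (d / (enorm v + 1)); first exact: divr_gt0.
move=> s Xs hs.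
have E : a + s *: v - (a + t *: v) = (s - t) *: v.
  by apply/rowP => i; rewrite !mxE; ring.
have := Hd _ Xs; rewrite E enormZ dotvZr => H.
have hst := normr_ge0 (s - t).
have H1 : `|s - t| * enorm v < d.
  apply: le_lt_trans (_ : `|s - t| * (enorm v + 1) < d).
    by apply: ler_wpM2l => //; lra.
  by rewrite -ltr_pdivlMr.
apply: le_trans (H H1) _.
have hq : eps / (enorm v + 1) * (enorm v + 1) = eps by rewrite divfK // lt0r_neq0.
have q0 : 0 <= eps / (enorm v + 1) by apply: divr_ge0; lra.
rewrite -[X in _ <= X * _]hq; nra.
Qed.

Lemma seg_bound (psi : 'rV[R]_n -> R) (G : 'rV[R]_n -> 'rV[R]_n)
  (Hg : forall z, X z -> is_grad_within X psi z (G z)) (a b : 'rV[R]_n) (al be : R) :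
  X a -> X b -> 0 <= be ->
  (forall t, 0 <= t -> t <= 1 -> dotv (G (a + t *: (b - a))) (b - a) <= al + be * t) ->
  psi b - psi a <= al + be / 2.
Proof.
move=> Xa Xb be0 Hb.
set v := b - a.
pose k s := psi (a + s *: v).
pose m s := k s - k 0 - al * s - be * s ^+ 2 / 2.
have ka : k 0 = psi a by rewrite /k scale0r addr0.
have kb : k 1 = psi b by rewrite /k scale1r /v addrCA subrr addr0.
suff : forall eta, 0 < eta -> m 1 <= eta * 1.
  move=> H; apply/ler_addgt0Pr => e e0; have := H e e0; rewrite /m ka kb; lra.
move=> eta eta0.
apply: (@real_induction R (fun t => m t <= eta * t)).
- by rewrite /m expr0n /= !mulr0 !mul0r subrr !subr0.
- move=> t t0 t1 Pt.
  have Xt : X (a + t *: v) by apply: seg_in; rewrite // ltW.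
  have [d d0 Hd] := seg_frechet (Hg _ Xt) eta0.
  exists d => // h h0 hd th1.
  have Xth : X (a + (t + h) *: v) by apply: seg_in => //; lra.
  have := Hd _ Xth; rewrite (_ : t + h - t = h); last by ring.
  rewrite gtr0_norm // => /(_ hd); rewrite ler_norml => /andP[_ H1].
  have := Hb t t0 (ltW t1); rewrite -/v => H2.
  have H3 : h * dotv (G (a + t *: v)) v <= h * (al + be * t) by apply: ler_wpM2l => //; lra.
  move: Pt; rewrite /m /k; nra.
- move=> t t0 t1 Hs.
  have Xt : X (a + t *: v) by apply: seg_in; rewrite // ltW.
  have [d d0 Hd] := seg_frechet (Hg _ Xt) ltr01.
  set gv := dotv (G (a + t *: v)) v.
  pose C := `|gv| + 1 + `|al| + be.
  have C0 : 0 <= C by rewrite /C; have := normr_ge0 gv; have := normr_ge0 al; lra.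
  apply/ler_addgt0Pr => r r0.
  pose h := Num.min (d / 2) (Num.min t (r / (C + 1))).
  have hd : h <= d / 2 by rewrite /h ge_min lexx.
  have ht : h <= t by rewrite /h !ge_min lexx !orbT.
  have hr : h <= r / (C + 1) by rewrite /h !ge_min lexx !orbT.
  have h0 : 0 < h by rewrite /h !lt_min divr_gt0 ?t0 ?divr_gt0 //=; lra.
  have hC : h * C <= r.
    have : h * (C + 1) <= r by rewrite -ler_pdivlMr //; lra.
    nra.
  have Xs : X (a + (t - h) *: v) by apply: seg_in => //; lra.
  have := Hd _ Xs; rewrite (_ : t - h - t = - h); last by ring.
  rewrite normrN gtr0_norm // => /(_ (ltac:(lra))); rewrite ler_norml => /andP[H1 _].
  have Ps := Hs (t - h) (ltac:(lra)) (ltac:(lra)).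
  have ngv := ler_norm gv; have ngv' : - gv <= `|gv| by rewrite -normrN ler_norm.
  have nal := ler_norm al; have nal' : - al <= `|al| by rewrite -normrN ler_norm.
  move: Ps; rewrite /m /k -/gv => Ps.
  have E1 : be * (t - h) ^+ 2 / 2 <= be * t ^+ 2 / 2.
    apply: ler_wpM2r => //; apply: ler_wpM2l => //; rewrite ler_sqr ?nnegrE; lra.
  have E2 : h * gv <= h * `|gv| by apply: ler_wpM2l; lra.
  have E3 : - (h * al) <= h * `|al| by rewrite -mulrN; apply: ler_wpM2l; lra.
  have E4 : 0 <= h * be by apply: mulr_ge0; lra.
  have E5 : eta * (t - h) <= eta * t by apply: ler_wpM2l; lra.
  have hC' : h * `|gv| + h + h * `|al| + h * be <= r by move: hC; rewrite /C; lra.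
  have E6 : al * (t - h) = al * t - h * al by ring.
  rewrite /m /k; move: H1; rewrite (_ : - h * gv = - (h * gv)); last by ring.
  move: Ps; rewrite E6; lra.
Qed.
End Seg.


Section Smooth.
Variable R : realType.
Variable n : nat.
Variable X : set 'rV[R]_n.
Hypothesis HX : convex_in X.

Lemma grad_neg (psi : 'rV[R]_n -> R) z g :
  is_grad_within X psi z g -> is_grad_within X (fun u => - psi u) z (- g).
Proof.
move=> H eps e0; have [d d0 Hd] := H eps e0; exists d => // u Xu hu.
rewrite dotvNl.
have -> : - psi u - - psi z - - dotv g (u - z) = - (psi u - psi z - dotv g (u - z)) by ring.
by rewrite normrN; apply: Hd.
Qed.

Lemma grad_sub (p1 p2 : 'rV[R]_n -> R) z g1 g2 :
  is_grad_within X p1 z g1 -> is_grad_within X p2 z g2 ->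
  is_grad_within X (fun u => p1 u - p2 u) z (g1 - g2).
Proof.
move=> H1 H2 eps e0.
have e2 : 0 < eps / 2 by rewrite divr_gt0.
have [d1 d10 Hd1] := H1 _ e2; have [d2 d20 Hd2] := H2 _ e2.
exists (Num.min d1 d2); first by rewrite lt_min d10 d20.
move=> u Xu; rewrite lt_min => /andP[h1 h2].
have := Hd1 u Xu h1; have := Hd2 u Xu h2; rewrite dotvBl => A B.
have -> : p1 u - p2 u - (p1 z - p2 z) - (dotv g1 (u - z) - dotv g2 (u - z)) =
  (p1 u - p1 z - dotv g1 (u - z)) - (p2 u - p2 z - dotv g2 (u - z)) by ring.
apply: le_trans (ler_normB _ _) _; lra.
Qed.

Variables (psi : 'rV[R]_n -> R) (G : 'rV[R]_n -> 'rV[R]_n) (L : R).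
Hypothesis Hg : forall z, X z -> is_grad_within X psi z (G z).
Hypothesis L0 : 0 <= L.
Hypothesis HL : forall z z', X z -> X z' -> enorm (G z' - G z) <= L * enorm (z' - z).

Lemma seg_sub (a v : 'rV[R]_n) t : a + t *: v - a = t *: v.
Proof. by rewrite addrC addKr. Qed.

Lemma descent a b : X a -> X b ->
  psi b <= psi a + dotv (G a) (b - a) + L / 2 * enorm (b - a) ^+ 2.
Proof.
move=> Xa Xb.
have := @seg_bound R n X HX psi G Hg a b (dotv (G a) (b - a)) (L * enorm (b - a) ^+ 2) Xa Xb.
have h0 : 0 <= L * enorm (b - a) ^+ 2 by apply: mulr_ge0 => //; rewrite sqr_ge0.
move=> /(_ h0) H.
suff: psi b - psi a <= dotv (G a) (b - a) + L * enorm (b - a) ^+ 2 / 2 by lra.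
apply: H => t t0 t1.
have Xt : X (a + t *: (b - a)) by apply: seg_in.
have E : dotv (G (a + t *: (b - a))) (b - a) =
   dotv (G a) (b - a) + dotv (G (a + t *: (b - a)) - G a) (b - a) by rewrite dotvBl; ring.
rewrite E lerD2l; apply: le_trans (cauchy_schwarz _ _) _.
apply: le_trans (ler_wpM2r (enorm_ge0 _) (HL Xa Xt)) _.
rewrite seg_sub enormZ ger0_norm //; apply: le_trans (lexx _) _.
rewrite expr2; lra.
Qed.

Lemma lower a b : X a -> X b ->
  psi a + dotv (G a) (b - a) - L / 2 * enorm (b - a) ^+ 2 <= psi b.
Proof.
move=> Xa Xb.
have Hg' : forall z, X z -> is_grad_within X (fun u => - psi u) z (- G z) by move=> z Xz; apply: grad_neg; apply: Hg.
have := @seg_bound R n X HX (fun u => - psi u) (fun z => - G z) Hg' a b (- dotv (G a) (b - a)) (L * enorm (b - a) ^+ 2) Xa Xb.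
have h0 : 0 <= L * enorm (b - a) ^+ 2 by apply: mulr_ge0 => //; rewrite sqr_ge0.
move=> /(_ h0) H.
suff: - psi b + psi a <= - dotv (G a) (b - a) + L * enorm (b - a) ^+ 2 / 2 by lra.
rewrite -[X in _ + X]opprK; apply: H => t t0 t1.
have Xt : X (a + t *: (b - a)) by apply: seg_in.
have E : dotv (- G (a + t *: (b - a))) (b - a) =
   - dotv (G a) (b - a) - dotv (G (a + t *: (b - a)) - G a) (b - a) by rewrite dotvNl dotvBl; ring.
rewrite E lerD2l; rewrite -dotvNl; apply: le_trans (cauchy_schwarz _ _) _.
rewrite enormN.
apply: le_trans (ler_wpM2r (enorm_ge0 _) (HL Xa Xt)) _.
rewrite seg_sub enormZ ger0_norm //; rewrite expr2; lra.
Qed.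

Definition wconv (phi : 'rV[R]_n -> R) (K : R) := forall a b t, X a -> X b -> 0 <= t -> t <= 1 ->
  phi (t *: a + (1 - t) *: b) <= t * phi a + (1 - t) * phi b + K / 2 * (t * (1 - t)) * enorm (a - b) ^+ 2.

Lemma wconv_psi : wconv psi L.
Proof.
move=> a b t Xa Xb t0 t1.
set z := t *: a + (1 - t) *: b.
have Xz : X z by apply: HX.
have la := lower Xz Xa; have lb := lower Xz Xb.
have Ea : a - z = (1 - t) *: (a - b) by apply/rowP => i; rewrite !mxE; ring.
have Eb : b - z = (- t) *: (a - b) by apply/rowP => i; rewrite !mxE; ring.
rewrite Ea Eb !dotvZr !enormZ !exprMn !real_normK ?num_real in la lb.
set N := enorm (a - b) ^+ 2 in la lb *.
set P := dotv (G z) (a - b) in la lb.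
have t1' : 0 <= 1 - t by lra.
have A1 : t * (psi z + (1 - t) * P - L / 2 * ((1 - t) ^+ 2 * N)) <= t * psi a by apply: ler_wpM2l.
have A2 : (1 - t) * (psi z + - t * P - L / 2 * ((- t) ^+ 2 * N)) <= (1 - t) * psi b by apply: ler_wpM2l.
have E : t * (psi z + (1 - t) * P - L / 2 * ((1 - t) ^+ 2 * N)) +
   (1 - t) * (psi z + - t * P - L / 2 * ((- t) ^+ 2 * N)) =
   psi z - L / 2 * (t * (1 - t)) * N by ring.
lra.
all: by [].
Qed.
End Smooth.

Section Lip.
Variable R : realType.
Variable n : nat.
Variable X : set 'rV[R]_n.
Hypothesis HX : convex_in X.
Lemma lip_bound (psi : 'rV[R]_n -> R) (G : 'rV[R]_n -> 'rV[R]_n) (M : R) :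
  (forall z, X z -> is_grad_within X psi z (G z)) ->
  (forall z, X z -> enorm (G z) <= M) ->
  forall a b, X a -> X b -> psi b - psi a <= M * enorm (b - a).
Proof.
move=> Hg HM a b Xa Xb.
have := @seg_bound R n X HX psi G Hg a b (M * enorm (b - a)) 0 Xa Xb (lexx 0).
rewrite mul0r addr0 => H; apply: le_trans (H _) _; first move=> t t0 t1.
- rewrite mul0r addr0; apply: le_trans (cauchy_schwarz _ _) _.
  by apply: ler_wpM2r; [exact: enorm_ge0| apply: HM; apply: seg_in].
- lra.
Qed.
End Lip.


Lemma norm_convex_id (R : realType) n (a b x : 'rV[R]_n) t :
  t * enorm (a - x) ^+ 2 + (1 - t) * enorm (b - x) ^+ 2 =
  enorm (t *: a + (1 - t) *: b - x) ^+ 2 + t * (1 - t) * enorm (a - b) ^+ 2.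
Proof.
have E1 : t *: a + (1 - t) *: b - x = t *: (a - x) + (1 - t) *: (b - x).
  by apply/rowP => i; rewrite !mxE; ring.
have E2 : a - b = (a - x) - (b - x) by apply/rowP => i; rewrite !mxE; ring.
rewrite E1 E2; move: (a - x) (b - x) => p q.
rewrite !enorm_sq !dotvDl !dotvDr !dotvNl !dotvNr !dotvZl !dotvZr (dotvC q p); ring.
Qed.

Lemma small_inv (R : realType) (r : R) : 0 < r -> exists N, forall k, (N <= k)%N -> (k.+1%:R)^-1 < r.
Proof.
move=> r0; exists (Num.trunc (r^-1)) => k Hk.
have h1 := truncnS_gt (r^-1).
have h2 : (Num.trunc r^-1).+1%:R <= k.+1%:R :> R by rewrite ler_nat ltnS.
rewrite invf_plt ?posrE //; lra.
Qed.

Section Prox.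
Variable R : realType.
Variable n : nat.
Variable X : set 'rV[R]_n.
Hypothesis HX : convex_in X.
Hypothesis cX : closed X.
Variable phi : 'rV[R]_n -> R.
Variable L : R.
Hypothesis L0 : 0 < L.
Hypothesis wc : wconv X phi L.
Hypothesis lsc : forall z, X z -> forall eta, 0 < eta -> exists2 d, 0 < d &
   forall u, X u -> enorm (u - z) < d -> phi z <= phi u + eta.
Variables (c : R) (w : 'rV[R]_n).
Hypothesis minor : forall u, X u -> c + dotv w u - L / 2 * enorm u ^+ 2 <= phi u.
Variable x : 'rV[R]_n.

Let F u := phi u + 2 * L / 2 * enorm (u - x) ^+ 2.

Lemma FE u : F u = phi u + L * enorm (u - x) ^+ 2.
Proof. by rewrite /F (mulrC 2 L) mulfK // pnatr_eq0. Qed.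

Lemma Fconv a b t : X a -> X b -> 0 <= t -> t <= 1 ->
  F (t *: a + (1 - t) *: b) <= t * F a + (1 - t) * F b - L / 2 * (t * (1 - t)) * enorm (a - b) ^+ 2.
Proof.
move=> Xa Xb t0 t1; rewrite !FE.
have := wc Xa Xb t0 t1; have := congr1 (fun r => L * r) (norm_convex_id a b x t) => /= id'; lra.
Qed.

Lemma F_lb : exists K, forall u, X u -> K <= F u.
Proof.
set q := w - (2 * L) *: x.
exists (c + L * enorm x ^+ 2 - dotv q q / (2 * L)) => u Xu.
have Eq : dotv u q = dotv w u - 2 * L * dotv u x by rewrite /q dotvBr dotvZr (dotvC u w).
clearbody q.
rewrite FE; have := minor Xu.
have H := dotv_ge0 (L *: u + q).
rewrite !dotvDl !dotvDr !dotvZl !dotvZr (dotvC q u) in H.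
have E : enorm (u - x) ^+ 2 = enorm u ^+ 2 - 2 * dotv u x + enorm x ^+ 2.
  by rewrite !enorm_sq !dotvBl !dotvBr (dotvC x u); ring.
rewrite E; rewrite Eq -enorm_sq in H.
have h2 : 0 < 2 * L by rewrite mulr_gt0.
have : dotv q q / (2 * L) * (2 * L) = dotv q q by rewrite divfK // lt0r_neq0.
set Q := dotv q q / (2 * L).
move=> EQ.
nra.
Qed.

Variable z0 : 'rV[R]_n.
Hypothesis Xz0 : X z0.

Lemma sq_le_1A (s A : R) : 0 <= s -> s ^+ 2 <= A -> s <= 1 + A.
Proof. move=> s0 h; nra. Qed.

Lemma prox_exists : exists2 xh, X xh & forall u, X u -> F xh <= F u.
Proof.
have Lp := L0.
have [K HK] := F_lb.
pose S := [set F u | u in X].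
have hS : has_inf S.
  split; first by exists (F z0), z0.
  by exists K => _ [u Xu <-]; exact: HK.
pose m := inf S.
have mle : forall u, X u -> m <= F u by move=> u Xu; apply: (inf_lbound hS.2); exists u.
have seq : forall k : nat, exists u, X u /\ F u < m + (k.+1%:R)^-1.
  move=> k; have e0 : 0 < (k.+1%:R : R)^-1 by rewrite invr_gt0 ltr0Sn.
  by have [_ [u Xu <-] H] := inf_adherent e0 hS; exists u.
have [u Hu] := choice seq.
pose e (k : nat) : R := (k.+1%:R)^-1.
have e0 : forall k, 0 < e k by move=> k; rewrite invr_gt0 ltr0Sn.
have e1 : forall k, e k <= 1 by move=> k; rewrite invf_le1 ?ler1n ?ltr0Sn.
have cauchy_est : forall j k, L * enorm (u j - u k) ^+ 2 <= 4 * (e j + e k).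
  move=> j k.
  have [Xj Fj] := Hu j; have [Xk Fk] := Hu k.
  have h20 : (0:R) <= 1/2 by lra.
  have h21 : (1/2:R) <= 1 by lra.
  have := Fconv Xj Xk h20 h21.
  have := mle _ (HX Xj Xk h20 h21).
  rewrite -/(e j) -/(e k) in Fj Fk.
  set N := enorm (u j - u k) ^+ 2.
  have : 1 / 2 * (1 - 1 / 2) = 1 / 4 :> R by field.
  move=> ->.
  lra.
have cu : cvg (u @ \oo).
  apply: cauchy_cvg; apply/cauchyP => eps eps0.
  have q0 : 0 < L * eps ^+ 2 / 8 by apply: divr_gt0 => //; apply: mulr_gt0 => //; apply: exprn_gt0.
  have [N HN] := small_inv q0.
  exists (u N); exists N => // k Nk /=.
  rewrite -ball_normE /ball_ /=.
  apply: le_lt_trans (mxnorm_le_enorm _) _.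
  have := cauchy_est N k; have := HN N (leqnn N); have := HN k Nk.
  rewrite -/(e N) -/(e k) => h1 h2 h3.
  have h4 : L * enorm (u N - u k) ^+ 2 < L * eps ^+ 2 by lra.
  rewrite ltr_pM2l // in h4.
  by rewrite -ltr_sqr ?nnegrE ?enorm_ge0 // ltW.
set l := lim (u @ \oo).
have Xl : X l.
  have := @closed_cvg nat _ \oo _ u X cX.
  move=> /(_ eventually_filter) H; apply: (H _ l cu).
  by exists 0%N => // k _; exact: (Hu k).1.
exists l => // v Xv; apply: le_trans (mle _ Xv); clear v Xv.
apply/ler_addgt0Pr => r r0.
have r4 : 0 < r / 4 by rewrite divr_gt0.
have [d1 d10 Hd1] := lsc Xl r4.
pose B := enorm (u 0%N - x) + 1 + 8 / L.
have Bk : forall k, enorm (u k - x) <= B.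
  move=> k; have := cauchy_est k 0%N; have := e1 k; have := e1 0%N; have := e0 k; have := e0 0%N => a1 a2 a3 a4 H.
  have H' : enorm (u k - u 0%N) ^+ 2 <= 8 / L.
    rewrite ler_pdivlMr //; lra.
  have := sq_le_1A (enorm_ge0 _) H'.
  have -> : u k - x = (u k - u 0%N) + (u 0%N - x) by rewrite addrA subrK.
  have := enorm_triangle (u k - u 0%N) (u 0%N - x); rewrite /B; lra.
have B0 : 0 <= B.
  have := enorm_ge0 (u 0%N - x); have : 0 <= 8 / L by apply: divr_ge0; lra.
  rewrite /B; lra.
pose d := Num.min d1 (Num.min 1 (r / (4 * L * (1 + 2 * B)))).
have hd1 : d <= d1 by rewrite /d ge_min lexx.
have hd2 : d <= 1 by rewrite /d !ge_min lexx !orbT.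
have hd3 : d <= r / (4 * L * (1 + 2 * B)) by rewrite /d !ge_min lexx !orbT.
have d0 : 0 < d.
  rewrite /d !lt_min d10 ltr01 /= divr_gt0 //; apply: mulr_gt0; [apply: mulr_gt0 => //| ]; lra.
have dn0 : 0 < d / (n%:R + 1) by apply: divr_gt0 => //; have := ler0n R n; lra.
have := cu; move/cvgrPdist_lt => /(_ _ dn0) [N1 _ HN1].
have [N2 HN2] := small_inv r4.
pose k := maxn N1 N2.
have k1 : (N1 <= k)%N by rewrite leq_maxl.
have k2 : (N2 <= k)%N by rewrite leq_maxr.
have Hk1 := HN1 k k1; have Hk2 := HN2 k k2.
rewrite /= in Hk1.
have [Xk Fk] := Hu k.
have dk : enorm (u k - l) < d.
  have := enorm_le_mxnorm (u k - l).
  rewrite -normrN opprB.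
  have n0 := ler0n R n.
  have nu0 := normr_ge0 (l - u k).
  have h : `|l - u k| * (n%:R + 1) < d by rewrite -ltr_pdivlMr //; lra.
  move=> H.
  rewrite -ltr_sqr ?nnegrE ?enorm_ge0 ?(ltW d0) //.
  apply: le_lt_trans H _.
  have : `|l - u k| ^+ 2 * (n%:R + 1) ^+ 2 < d ^+ 2.
    have hnn : 0 <= `|l - u k| * (n%:R + 1) by apply: mulr_ge0; lra.
    by rewrite -exprMn ltr_sqr ?nnegrE ?(ltW d0).
  nra.
have := Hd1 _ Xk (lt_le_trans dk hd1) => Hphi.
have El : l - x = (l - u k) + (u k - x) by rewrite addrA subrK.
have Hl : enorm (l - x) ^+ 2 <= enorm (u k - x) ^+ 2 + 2 * d * B + d ^+ 2.
  rewrite El enorm_sqD.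
  have := cauchy_schwarz (l - u k) (u k - x).
  have := Bk k.
  rewrite enormB in dk.
  have := enorm_ge0 (l - u k); have := enorm_ge0 (u k - x).
  nra.
rewrite !FE in Fk *.
have : L * (2 * d * B + d ^+ 2) <= r / 4.
  have dd : d ^+ 2 <= d by rewrite expr2; nra.
  have := ler_wpM2l (ltW Lp) dd.
  have : L * (2 * d * B + d ^+ 2) = 2 * L * d * B + L * d ^+ 2 by ring.
  have : L * d * (1 + 2 * B) = L * d + 2 * L * d * B by ring.
  move=> E1 E2 E3.
  have : L * (2 * d * B + d ^+ 2) <= L * d * (1 + 2 * B) by rewrite E1 E2; lra.
  have : L * d * (1 + 2 * B) <= r / 4.
    have hpos : 0 < 4 * L * (1 + 2 * B) by apply: mulr_gt0; [apply: mulr_gt0 => //|]; lra.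
    move: hd3; rewrite ler_pdivlMr // => hd3.
    have : L * d * (1 + 2 * B) * 4 <= r by move: hd3; rewrite mulrC; nra.
    lra.
  lra.
have : L * enorm (l - x) ^+ 2 <= L * (enorm (u k - x) ^+ 2 + 2 * d * B + d ^+ 2) by apply: ler_wpM2l => //; lra.
move=> H1 H2.
move: Hk2 Fk; move: (k.+1%:R^-1 : R) => ek Hk2 Fk.
have : L * (enorm (u k - x) ^+ 2 + 2 * d * B + d ^+ 2) = L * enorm (u k - x) ^+ 2 + L * (2 * d * B + d ^+ 2) by ring.
lra.
Qed.

Lemma qgrowth xh : X xh -> (forall u, X u -> F xh <= F u) ->
  forall u, X u -> F xh + L / 2 * enorm (u - xh) ^+ 2 <= F u.
Proof.
move=> Xh Hmin u Xu.
have Lp := L0.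
set N := enorm (u - xh) ^+ 2.
have N0 : 0 <= N by rewrite /N sqr_ge0.
have key : forall t, 0 < t -> t <= 1 -> L / 2 * (1 - t) * N <= F u - F xh.
  move=> t t0 t1.
  have := Fconv Xu Xh (ltW t0) t1; have := Hmin _ (HX Xu Xh (ltW t0) t1).
  rewrite -/N => h1 h2.
  have : t * (L / 2 * (1 - t) * N) <= t * (F u - F xh).
    have E : t * (L / 2 * (1 - t) * N) = L / 2 * (t * (1 - t)) * N by ring.
    rewrite E; lra.
  by rewrite ler_pM2l.
suff : L / 2 * N <= F u - F xh by lra.
apply/ler_addgt0Pr => r r0.
have M1 : 0 <= L / 2 * N by apply: mulr_ge0 => //; apply: divr_ge0; lra.
have M0 : 0 < L / 2 * N + 1 by lra.
pose t := Num.min 1 (r / (L / 2 * N + 1)).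
have t1 : t <= 1 by rewrite /t ge_min lexx.
have t2 : t <= r / (L / 2 * N + 1) by rewrite /t ge_min lexx orbT.
have t0 : 0 < t by rewrite /t lt_min ltr01 divr_gt0.
have := key t t0 t1.
move: t2; rewrite ler_pdivlMr // => t2.
have E : L / 2 * (1 - t) * N = L / 2 * N - t * (L / 2 * N) by ring.
rewrite E; nra.
Qed.

Lemma Fz_id (u z : 'rV[R]_n) :
  phi u + 2 * L / 2 * enorm (u - z) ^+ 2 = F u - 2 * L * dotv (u - x) (z - x) + L * enorm (z - x) ^+ 2.
Proof.
rewrite FE (mulrC 2 L) mulfK ?pnatr_eq0 //.
have -> : u - z = (u - x) - (z - x) by apply/rowP => i; rewrite !mxE; ring.
move: (u - x) (z - x) => p q.
rewrite !enorm_sq !dotvDl !dotvDr !dotvNl !dotvNr (dotvC q p); ring.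
Qed.

Lemma moreau_grad xh : X xh -> (forall u, X u -> F xh <= F u) ->
  is_grad_within setT (moreau X phi (2 * L)) x ((2 * L) *: (x - xh)).
Proof.
move=> Xh Hmin eps e0.
have Lp := L0.
have QG := qgrowth Xh Hmin.
exists (eps / L); first by apply: divr_gt0.
move=> z _ hz.
set D := z - x.
have D0 := enorm_ge0 D.
have ex : moreau X phi (2 * L) x = F xh.
  rewrite /moreau; apply/eqP; rewrite eq_le; apply/andP; split.
  - apply: inf_lbound; last by exists xh.
    by exists (F xh) => _ [u Xu <-]; exact: Hmin.
  - apply: lb_le_inf; first by exists (F xh), xh.
    by move=> _ [u Xu <-]; exact: Hmin.
have gD : dotv ((2 * L) *: (x - xh)) D = - (2 * L * dotv (xh - x) D).
  by rewrite dotvZl -(opprB xh x) dotvNl mulrN.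
have lowb : forall u, X u -> F xh - 2 * L * dotv (xh - x) D - L * enorm D ^+ 2 <=
                         phi u + 2 * L / 2 * enorm (u - z) ^+ 2.
  move=> u Xu; rewrite Fz_id -/D.
  have := QG u Xu.
  have E : dotv (u - x) D = dotv (xh - x) D + dotv (u - xh) D.
    by rewrite -dotvDl; congr dotv; apply/rowP => i; rewrite !mxE; ring.
  rewrite E.
  have cs := cauchy_schwarz (u - xh) D.
  have s0 := enorm_ge0 (u - xh).
  move: cs s0; move: (enorm (u - xh)) (dotv (u - xh) D) => s dd cs s0.
  have : 0 <= L / 2 * (s - 2 * enorm D) ^+ 2 by apply: mulr_ge0; [lra| apply: sqr_ge0].
  have : 2 * L * dd <= 2 * L * (s * enorm D) by apply: ler_wpM2l; lra.
  move=> h1 h2 h3.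
  have E2 : L / 2 * (s - 2 * enorm D) ^+ 2 = L / 2 * s ^+ 2 - 2 * L * (s * enorm D) + 2 * L * enorm D ^+ 2 by field.
  lra.
have upb : moreau X phi (2 * L) z <= F xh - 2 * L * dotv (xh - x) D + L * enorm D ^+ 2.
  rewrite -Fz_id; apply: inf_lbound; last by exists xh.
  by exists (F xh - 2 * L * dotv (xh - x) D - L * enorm D ^+ 2) => _ [u Xu <-]; exact: lowb.
have lb : F xh - 2 * L * dotv (xh - x) D - L * enorm D ^+ 2 <= moreau X phi (2 * L) z.
  apply: lb_le_inf; first by exists (phi xh + 2 * L / 2 * enorm (xh - z) ^+ 2), xh.
  by move=> _ [u Xu <-]; exact: lowb.
rewrite ex gD.
have hD : L * enorm D < eps by rewrite -ltr_pdivlMl // mulrC.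
have : L * enorm D ^+ 2 <= eps * enorm D by rewrite expr2 mulrA; apply: ler_wpM2r => //; lra.
move=> h; rewrite ler_norml; apply/andP; split; lra.
Qed.
End Prox.


Section Gen.
Variable R : realType.
Variable n : nat.
Variable X : set 'rV[R]_n.

Lemma lsc_of_grad (psi : 'rV[R]_n -> R) z g : is_grad_within X psi z g ->
  forall eta, 0 < eta -> exists2 d, 0 < d &
   forall u, X u -> enorm (u - z) < d -> psi z <= psi u + eta.
Proof.
move=> H eta eta0.
have [d1 d10 Hd1] := H 1 ltr01.
have g0 := enorm_ge0 g.
have g1 : 0 < enorm g + 1 by lra.
exists (Num.min d1 (eta / (enorm g + 1))); first by rewrite lt_min d10 divr_gt0.
move=> u Xu; rewrite lt_min => /andP[h1 h2].
have := Hd1 u Xu h1; rewrite mul1r ler_norml => /andP[H1 _].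
have := cauchy_schwarz_abs g (u - z); rewrite ler_norml => /andP[H2 _].
move: h2; rewrite ltr_pdivlMr // => h2.
have := enorm_ge0 (u - z) => h3.
have : enorm g * enorm (u - z) + enorm (u - z) < eta by nra.
lra.
Qed.

Lemma minorant_of_lower (psi : 'rV[R]_n -> R) (G : 'rV[R]_n -> 'rV[R]_n) (L : R) a :
  (forall u, X u -> psi a + dotv (G a) (u - a) - L / 2 * enorm (u - a) ^+ 2 <= psi u) ->
  forall u, X u ->
  (psi a - dotv (G a) a - L / 2 * enorm a ^+ 2) + dotv (G a + L *: a) u - L / 2 * enorm u ^+ 2 <= psi u.
Proof.
move=> H u Xu; apply: le_trans (H u Xu).
rewrite !enorm_sq dotvBl !dotvBr !dotvDl dotvZl (dotvC a u) (dotvC (G a) u).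
rewrite -enorm_sq le_eqVlt; apply/orP; left; apply/eqP; field. all: by [].
Qed.
End Gen.


Section Main.
Variables (R : realType) (n m : nat) (X : set 'rV[R]_n) (Y : set 'rV[R]_m) (D : R)
  (f : 'rV[R]_n -> 'rV[R]_m -> R) (gx : 'rV[R]_n -> 'rV[R]_m -> 'rV[R]_n)
  (proj : 'rV[R]_n -> 'rV[R]_n) (lam mu : R) (x0 : 'rV[R]_n) (yh : 'rV[R]_m).
Hypotheses (cvX : convex_in X) (clX : closed X)
  (HD : forall y y', Y y -> Y y' -> enorm (y - y') <= D)
  (Hmax : forall x, X x -> exists2 y, Y y & forall y', Y y' -> f x y' <= f x y)
  (lam0 : 0 < lam) (mu0 : 0 <= mu)
  (Hgrad : forall x y, X x -> Y y -> is_grad_within X (fun u => f u y) x (gx x y))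
  (Hlip : forall x x' y y', X x -> X x' -> Y y -> Y y' ->
     enorm (gx x' y' - gx x y) <= lam * enorm (x' - x) + mu * enorm (y' - y))
  (Hproj : is_proj X proj) (Xx0 : X x0) (Yyh : Y yh).

Lemma HLy y : Y y -> forall z z', X z -> X z' -> enorm (gx z' y - gx z y) <= lam * enorm (z' - z).
Proof. by move=> Yy z z' Xz Xz'; have := Hlip Xz Xz' Yy Yy; rewrite subrr enorm0 mulr0 addr0. Qed.

Lemma wcy y : Y y -> wconv X (fun u => f u y) lam.
Proof.
move=> Yy; apply: (wconv_psi cvX (G := fun z => gx z y)).
- by move=> z Xz; apply: Hgrad.
- exact: ltW.
- exact: HLy.
Qed.

Lemma lowery y : Y y -> forall a b, X a -> X b ->
  f a y + dotv (gx a y) (b - a) - lam / 2 * enorm (b - a) ^+ 2 <= f b y.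
Proof.
move=> Yy a b Xa Xb; apply: (lower cvX (psi := fun u => f u y) (G := fun z => gx z y)) => //.
- by move=> z Xz; apply: Hgrad.
- exact: ltW.
- exact: HLy.
Qed.

Lemma descenty y : Y y -> forall a b, X a -> X b ->
  f b y <= f a y + dotv (gx a y) (b - a) + lam / 2 * enorm (b - a) ^+ 2.
Proof.
move=> Yy a b Xa Xb; apply: (descent cvX (psi := fun u => f u y) (G := fun z => gx z y)) => //.
- by move=> z Xz; apply: Hgrad.
- exact: ltW.
- exact: HLy.
Qed.

Lemma phimax_ge z y : X z -> Y y -> f z y <= phimax f Y z.
Proof.
move=> Xz Yy; have [ys Yys Hys] := Hmax Xz.
apply: sup_ubound; last by exists y.
by exists (f z ys) => _ [y' Yy' <-]; exact: Hys.
Qed.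

Lemma phimax_eq z y : X z -> Y y -> (forall y', Y y' -> f z y' <= f z y) -> phimax f Y z = f z y.
Proof.
move=> Xz Yy Hy; apply/eqP; rewrite eq_le phimax_ge // andbT.
by apply: ge_sup; [exists (f z y), y | move=> _ [y' Yy' <-]; exact: Hy].
Qed.

Lemma wc_phi : wconv X (phimax f Y) lam.
Proof.
move=> a b t Xa Xb t0 t1.
have Xz := cvX Xa Xb t0 t1.
have [ys Yys Hys] := Hmax Xz.
rewrite (phimax_eq Xz Yys Hys).
apply: le_trans (wcy Yys Xa Xb t0 t1) _.
rewrite lerD2r; apply: lerD; apply: ler_wpM2l; try lra; exact: phimax_ge.
Qed.

Lemma lsc_y y : Y y -> forall z, X z -> forall eta, 0 < eta -> exists2 d, 0 < d &
   forall u, X u -> enorm (u - z) < d -> f z y <= f u y + eta.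
Proof. move=> Yy z Xz; exact: (lsc_of_grad (Hgrad Xz Yy)). Qed.

Lemma lsc_phi z : X z -> forall eta, 0 < eta -> exists2 d, 0 < d &
   forall u, X u -> enorm (u - z) < d -> phimax f Y z <= phimax f Y u + eta.
Proof.
move=> Xz eta eta0; have [ys Yys Hys] := Hmax Xz.
have [d d0 Hd] := lsc_y Yys Xz eta0.
exists d => // u Xu hu; rewrite (phimax_eq Xz Yys Hys).
apply: le_trans (Hd u Xu hu) _; rewrite lerD2r; exact: phimax_ge.
Qed.

Let fh u := f u yh.
Let Gh z := gx z yh.
Let c0 := fh x0 - dotv (Gh x0) x0 - lam / 2 * enorm x0 ^+ 2.
Let w0 := Gh x0 + lam *: x0.

Lemma minor_h u : X u -> c0 + dotv w0 u - lam / 2 * enorm u ^+ 2 <= fh u.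
Proof.
apply: (minorant_of_lower (psi := fh) (G := Gh)) => v Xv.
exact: lowery.
Qed.

Lemma minor_phi u : X u -> c0 + dotv w0 u - lam / 2 * enorm u ^+ 2 <= phimax f Y u.
Proof. move=> Xu; apply: le_trans (minor_h Xu) _; exact: phimax_ge. Qed.


Lemma prox_h z : exists2 xh, X xh & forall u, X u ->
  fh xh + 2 * lam / 2 * enorm (xh - z) ^+ 2 <= fh u + 2 * lam / 2 * enorm (u - z) ^+ 2.
Proof.
have := @prox_exists R n X cvX clX fh lam lam0 (wcy Yyh) (lsc_y Yyh) c0 w0 minor_h z x0 Xx0.
by [].
Qed.

Lemma prox_phi z : exists2 xh, X xh & forall u, X u ->
  phimax f Y xh + 2 * lam / 2 * enorm (xh - z) ^+ 2 <= phimax f Y u + 2 * lam / 2 * enorm (u - z) ^+ 2.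
Proof.
have := @prox_exists R n X cvX clX (phimax f Y) lam lam0 wc_phi lsc_phi c0 w0 minor_phi z x0 Xx0.
by [].
Qed.

Definition Q z r := X z /\ 0 <= r /\ forall u, X u ->
  2 * lam * dotv (Gh z) (z - u) - lam ^+ 2 * enorm (z - u) ^+ 2 <= r ^+ 2.

Lemma bound_h z r xh : Q z r -> X xh -> (forall u, X u ->
  fh xh + 2 * lam / 2 * enorm (xh - z) ^+ 2 <= fh u + 2 * lam / 2 * enorm (u - z) ^+ 2) ->
  lam * enorm (z - xh) <= r.
Proof.
move=> [Xz [r0 Hq]] Xh Hmin.
have Lp := lam0.
have QG := @qgrowth R n X cvX fh lam lam0 (wcy Yyh) z xh Xh Hmin z Xz.
rewrite /= subrr enorm0 expr0n /= mulr0 addr0 in QG.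
have lo := lowery Yyh Xz Xh.
have q := Hq xh Xh.
rewrite -/(fh z) -/(fh xh) -/(Gh z) in lo QG.
have E1 : 2 * lam / 2 = lam by rewrite (mulrC 2 lam) mulfK // pnatr_eq0.
rewrite E1 in QG.
have E2 : dotv (Gh z) (z - xh) = - dotv (Gh z) (xh - z) by rewrite -dotvNr opprB.
rewrite E2 in q.
rewrite (enormB xh z) in QG lo.
move: QG lo q; move: (enorm (z - xh)) (dotv (Gh z) (xh - z)) (enorm_ge0 (z - xh)) => A P A0 QG lo q.
have h : (lam * A) ^+ 2 <= r ^+ 2.
  have : P <= - lam * A ^+ 2.
    have : lam / 2 * A ^+ 2 * 2 = lam * A ^+ 2 by field.
    lra.
  move=> hP.
  have : 2 * lam * P <= 2 * lam * (- lam * A ^+ 2) by apply: ler_wpM2l; lra.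
  rewrite exprMn; lra.
by rewrite -ler_sqr ?nnegrE //; apply: mulr_ge0; lra.
Qed.


Lemma step z : X z ->
  let g := Gh z in let xtil := z - lam^-1 *: g in let p := proj xtil in
  let e := Num.sqrt (enorm g ^+ 2 - lam^-1 ^- 2 * enorm (xtil - p) ^+ 2) in
  X p /\ Q z e /\ fh p <= fh z - e ^+ 2 / (2 * lam).
Proof.
move=> Xz g xtil p e.
have Lp := lam0.
have [Xp Hp] := Hproj xtil.
have lamE : lam^-1 ^- 2 = lam ^+ 2 by rewrite exprVn invrK.
have key : forall u, lam ^+ 2 * enorm (xtil - u) ^+ 2 =
    lam ^+ 2 * enorm (z - u) ^+ 2 - 2 * lam * dotv g (z - u) + enorm g ^+ 2.
  move=> u.
  have -> : xtil - u = (z - u) - lam^-1 *: g by rewrite /xtil; apply/rowP => i; rewrite !mxE; ring.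
  rewrite (enorm_sqB (z - u) (lam^-1 *: g)) enormZ dotvZr exprMn real_normK ?num_real // (dotvC (z - u) g).
  field; lra.
have near : forall u, X u -> lam ^+ 2 * enorm (xtil - p) ^+ 2 <= lam ^+ 2 * enorm (xtil - u) ^+ 2.
  move=> u Xu; apply: ler_wpM2l; first exact: sqr_ge0.
  by rewrite ler_sqr ?nnegrE ?enorm_ge0 //; apply: Hp.
set I := enorm g ^+ 2 - lam^-1 ^- 2 * enorm (xtil - p) ^+ 2.
have Ilow : forall u, X u -> 2 * lam * dotv g (z - u) - lam ^+ 2 * enorm (z - u) ^+ 2 <= I.
  move=> u Xu; have := near u Xu; rewrite (key u) /I lamE; lra.
have I0 : 0 <= I by have := Ilow z Xz; rewrite subrr dotv0r enorm0 expr0n /= !mulr0 subrr.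
have eI : e ^+ 2 = I by rewrite /e sqr_sqrtr.
split => //; split; first by split; [| split; [exact: sqrtr_ge0| move=> u Xu; rewrite eI; exact: Ilow]].
have := descenty Yyh Xz Xp; rewrite -/(fh p) -/(fh z) -/(Gh z) -/g.
have Ip : I = 2 * lam * dotv g (z - p) - lam ^+ 2 * enorm (z - p) ^+ 2.
  by rewrite /I lamE key; ring.
rewrite eI Ip (enormB p z).
have -> : dotv g (p - z) = - dotv g (z - p) by rewrite -dotvNr opprB.
move=> H.
have E : (2 * lam * dotv g (z - p) - lam ^+ 2 * enorm (z - p) ^+ 2) / (2 * lam) =
  dotv g (z - p) - lam / 2 * enorm (z - p) ^+ 2 by field; lra.
lra.
Qed.


Definition inv_ok (t : nat) (st : 'rV[R]_n * 'rV[R]_n * \bar R) : Prop :=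
  let '(xt, xs, es) := st in
  X xt /\ ((t = 0%N /\ xs = x0 /\ es = +oo%E /\ xt = x0) \/
           ((0 < t)%N /\ exists r, es = r%:E /\ Q xs r /\ t%:R * r ^+ 2 <= 2 * lam * (fh x0 - fh xt))).

Lemma inv_all t : inv_ok t (alg1_state gx proj x0 yh lam^-1 t).
Proof.
elim: t => [|t IH]; first by split => //; left.
rewrite /=; move: IH.
case: (alg1_state gx proj x0 yh lam^-1 t) => [[xt xs] es] /= [Xt IH].
have := step Xt => /=; rewrite /Gh.
set p := proj (xt - lam^-1 *: gx xt yh).
set e := Num.sqrt (enorm (gx xt yh) ^+ 2 - _).
move=> [Xp [Qe De]].
have Lp := lam0.
have e0 : 0 <= e := sqrtr_ge0 _.
have De' : e ^+ 2 <= 2 * lam * (fh xt - fh p).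
  have h2 : 0 < 2 * lam by lra.
  rewrite mulrC -ler_pdivrMr //; lra.
have tS : t.+1%:R = t%:R + 1 :> R by rewrite -addn1 natrD.
case: ifP => Hlt /=.
- split => //; right; split => //; exists e; split => //; split => //.
  case: IH => [[t0 [_ [_ Ex]]]|[t0 [r [esr [Qr Hr]]]]].
    by rewrite t0 mul1r -Ex.
  rewrite esr lte_fin in Hlt.
  have er : e ^+ 2 <= r ^+ 2 by rewrite ler_sqr ?nnegrE ?(ltW Hlt) //; lra.
  have : t%:R * e ^+ 2 <= t%:R * r ^+ 2 by apply: ler_wpM2l => //; apply: ler0n.
  rewrite tS; lra.
- split => //.
  case: IH => [[-> [_ [esr _]]]|[t0 [r [esr [Qr Hr]]]]].
    by rewrite esr ltey in Hlt.
  right; split => //; exists r; split => //; split => //.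
  rewrite esr lte_fin in Hlt.
  have hre : r <= e by rewrite leNgt Hlt.
  have r0 : 0 <= r by case: Qr => _ [].
  have : r ^+ 2 <= e ^+ 2 by rewrite ler_sqr ?nnegrE.
  rewrite tS; lra.
Qed.

Lemma part2 z xh xt : X xh -> (forall u, X u ->
  fh xh + 2 * lam / 2 * enorm (xh - z) ^+ 2 <= fh u + 2 * lam / 2 * enorm (u - z) ^+ 2) ->
  X xt -> (forall u, X u ->
  phimax f Y xt + 2 * lam / 2 * enorm (xt - z) ^+ 2 <= phimax f Y u + 2 * lam / 2 * enorm (u - z) ^+ 2) ->
  lam * enorm (xh - xt) <= mu * D.
Proof.
move=> Xh Hh Xt Ht.
have Lp := lam0; have mp := mu0.
have QG1 := @qgrowth R n X cvX fh lam lam0 (wcy Yyh) z xh Xh Hh xt Xt.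
have QG2 := @qgrowth R n X cvX (phimax f Y) lam lam0 wc_phi z xt Xt Ht xh Xh.
rewrite /= in QG1 QG2.
have [ys Yys Hys] := Hmax Xh.
have E1 := phimax_eq Xh Yys Hys.
have E2 := phimax_ge Xt Yys.
have D0 : 0 <= D by have := HD Yyh Yyh; rewrite subrr enorm0.
have Lk : f xh ys - fh xh - (f xt ys - fh xt) <= mu * D * enorm (xh - xt).
  have := @lip_bound R n X cvX (fun u => f u ys - f u yh) (fun z => gx z ys - gx z yh) (mu * D).
  move=> /(_ _ _ xt xh Xt Xh); apply.
  - by move=> u Xu; apply: grad_sub; apply: Hgrad.
  - move=> u Xu; have := Hlip Xu Xu Yyh Yys; rewrite subrr enorm0 mulr0 add0r => H.
    apply: le_trans H _; apply: ler_wpM2l => //; exact: HD.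
rewrite (enormB xt xh) in QG1.
rewrite E1 in QG2.
move: QG1 QG2 Lk E2; rewrite /fh.
have d0 := enorm_ge0 (xh - xt).
move: (enorm (xh - xt)) d0 => d d0 Q1 Q2 Lk E2.
have key : lam * d ^+ 2 <= mu * D * d by lra.
have [->|dne] := eqVneq d 0; first by rewrite mulr0; apply: mulr_ge0.
have dp : 0 < d by rewrite lt_def dne d0.
by rewrite -(ler_pM2r dp) -mulrA -expr2.
Qed.

Lemma get_r (eps : R) (T : nat) : 0 < eps ->
  ((300 * lam / eps ^+ 2)%:E * ((phimax f Y x0)%:E - psimin f X yh) <= (T%:R)%:E)%E ->
  exists r, Q (alg1 gx proj x0 yh lam^-1 T) r /\ r ^+ 2 <= eps ^+ 2 / 150.
Proof.
move=> eps0 HT.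
have Lp := lam0.
have psi_le : forall u, X u -> (psimin f X yh <= (f u yh)%:E)%E.
  by move=> u Xu; apply: ereal_inf_lbound; exists u.
have c0' : 0 < 300 * lam / eps ^+ 2 by apply: divr_gt0; [lra| apply: exprn_gt0].
have ceq : 300 * lam / eps ^+ 2 * eps ^+ 2 = 300 * lam by rewrite divfK // expf_neq0 // lt0r_neq0.
have fa : fh x0 <= phimax f Y x0 by apply: phimax_ge.
case Epsi: (psimin f X yh) => [s| |] in HT psi_le.
- rewrite -EFinB -EFinM lee_fin in HT.
  have sle : forall u, X u -> s <= fh u by move=> u Xu; have := psi_le u Xu; rewrite lee_fin.
  have H1 : 300 * lam * (phimax f Y x0 - s) <= T%:R * eps ^+ 2.
    rewrite -ceq -mulrA [_ * (_ - _)]mulrC mulrA; apply: ler_wpM2r => //; exact: sqr_ge0.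
  have := inv_all T; rewrite /alg1.
  case: (alg1_state gx proj x0 yh lam^-1 T) => [[xT xs] es] /= [XT [[T0 [-> _]]|[T0 [r [_ [Qr Hr]]]]]].
  + exists 0; split; last by rewrite expr0n /=; apply: divr_ge0; [exact: sqr_ge0| lra].
    split => //; split => // u Xu.
    rewrite T0 mul0r in H1.
    have h1 : fh x0 <= fh u.
      have := sle u Xu; have : phimax f Y x0 <= s by nra.
      lra.
    have := descenty Yyh Xx0 Xu; rewrite -/(fh u) -/(fh x0) -/(Gh x0).
    rewrite (enormB u x0).
    have -> : dotv (Gh x0) (u - x0) = - dotv (Gh x0) (x0 - u) by rewrite -dotvNr opprB.
    move: (dotv (Gh x0) (x0 - u)) (enorm (x0 - u)) => P A H.
    have : P <= lam / 2 * A ^+ 2 by lra.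
    move=> hP; rewrite expr0n /=.
    have : 2 * lam * P <= 2 * lam * (lam / 2 * A ^+ 2) by apply: ler_wpM2l; lra.
    have -> : 2 * lam * (lam / 2 * A ^+ 2) = lam ^+ 2 * A ^+ 2 by field.
    lra.
  + exists r; split => //.
    have sT := sle xT XT.
    have Tp : 0 < T%:R :> R by rewrite ltr0n.
    have : T%:R * r ^+ 2 * 150 <= T%:R * eps ^+ 2.
      apply: le_trans H1.
      have : lam * (fh x0 - fh xT) <= lam * (phimax f Y x0 - s) by apply: ler_wpM2l; lra.
      move: Hr; move: (T%:R * r ^+ 2) => Tr Hr.
      lra.
    rewrite -mulrA ler_pM2l // => h; rewrite ler_pdivlMr //; lra.
- by have := psi_le x0 Xx0; rewrite leye_eq.
- by move: HT => /=; rewrite mulry gtr0_sg // mul1e leye_eq.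
Qed.
End Main.

Unset Implicit Arguments.
Theorem theorem2 (R : realType) (n m : nat)
  (X : set 'rV[R]_n) (Y : set 'rV[R]_m) (D : R)
  (f : 'rV[R]_n -> 'rV[R]_m -> R) (gx : 'rV[R]_n -> 'rV[R]_m -> 'rV[R]_n)
  (proj : 'rV[R]_n -> 'rV[R]_n) (lam mu eps : R)
  (x0 : 'rV[R]_n) (yh : 'rV[R]_m) (T : nat) :
  (* standing assumptions *)
  convex_in X -> interior X !=set0 -> closed X ->
  convex_in Y -> interior Y !=set0 -> compact Y ->
  (forall y y', Y y -> Y y' -> enorm (y - y') <= D) ->
  (* phi(x) = max_{y in Y} f(x,y) is attained *)
  (forall x, X x -> exists2 y, Y y & forall y', Y y' -> f x y' <= f x y) ->
  (* (A1) *)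
  0 < lam -> 0 <= mu ->
  (forall x y, X x -> Y y -> is_grad_within X (fun u => f u y) x (gx x y)) ->
  (forall x x' y y', X x -> X x' -> Y y -> Y y' ->
     enorm (gx x' y' - gx x y) <= lam * enorm (x' - x) + mu * enorm (y' - y)) ->
  (* Pi_X *)
  is_proj X proj ->
  (* algorithm input *)
  X x0 -> Y yh -> 0 < eps ->
  ((300 * lam / eps ^+ 2)%:E * ((phimax f Y x0)%:E - psimin f X yh) <= (T%:R)%:E)%E ->
  let xs := alg1 gx proj x0 yh lam^-1 T in
  (exists2 g, is_grad_within setT (moreau X (fun x => f x yh) (2 * lam)) xs g
            & enorm g <= eps / 6) /\
  (24 * mu * D <= eps ->
   exists2 g, is_grad_within setT (moreau X (phimax f Y) (2 * lam)) xs g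
            & enorm g <= eps).
Proof.
move=> cvX _ clX _ _ _ HD Hmax lam0 mu0 Hgrad Hlip Hproj Xx0 Yyh eps0 HT xs.
have [r [Qr hr]] := get_r cvX Hmax lam0 Hgrad Hlip Hproj Xx0 Yyh eps0 HT.
rewrite -/xs in Qr.
have Lp := lam0.
have r0 : 0 <= r by case: Qr => _ [].
have [xh Xh Hh] := prox_h cvX clX lam0 Hgrad Hlip Xx0 Yyh xs.
have bh := bound_h cvX lam0 Hgrad Hlip Yyh Qr Xh Hh.
have h2r : 2 * r <= eps / 6.
  rewrite -ler_sqr ?nnegrE; last 2 first.
  - lra.
  - apply: divr_ge0; lra.
  have : (eps / 6) ^+ 2 = eps ^+ 2 / 36 by rewrite expr_div_n; congr (_ / _); rewrite -natrX.
  move=> ->; rewrite exprMn.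
  have : eps ^+ 2 / 150 <= eps ^+ 2 / 144.
    by apply: ler_wpM2l; [exact: sqr_ge0| rewrite lef_pV2 ?posrE // ler_nat].
  have : eps ^+ 2 / 144 * 4 = eps ^+ 2 / 36 by field.
  lra.
have n2 : forall z, enorm ((2 * lam) *: (xs - z)) = 2 * lam * enorm (xs - z).
  by move=> z; rewrite enormZ ger0_norm //; lra.
split.
  exists ((2 * lam) *: (xs - xh)).
    exact: (moreau_grad cvX lam0 (wcy cvX lam0 Hgrad Hlip Yyh) Xh Hh).
  rewrite n2; lra.
move=> HmuD.
have [xt Xt Ht] := prox_phi cvX clX Hmax lam0 Hgrad Hlip Xx0 Yyh xs.
have p2 := part2 cvX HD Hmax lam0 mu0 Hgrad Hlip Yyh Xh Hh Xt Ht.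
exists ((2 * lam) *: (xs - xt)).
  exact: (moreau_grad cvX lam0 (wc_phi cvX Hmax lam0 Hgrad Hlip) Xt Ht).
rewrite n2.
have tri : enorm (xs - xt) <= enorm (xs - xh) + enorm (xh - xt).
  by have := enorm_triangle (xs - xh) (xh - xt); rewrite addrA subrK.
have : lam * enorm (xs - xt) <= lam * enorm (xs - xh) + lam * enorm (xh - xt).
  by rewrite -mulrDr; apply: ler_wpM2l; lra.
lra.
Qed.
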